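(* If $\mathcal{I}$ is a boring ideal, then every Hausdorff space in $\mathrm{FinBW}(\mathcal{I})$ is a boring space.
   Context: An ideal on an infinite countable set $X$ is a family $\mathcal{I}\subseteq\mathcal{P}(X)$ closed under subsets and finite unions, containing all finite subsets, with $X\notin\mathcal{I}$. A space $X$ is in $\mathrm{FinBW}(\mathcal{I})$ if $X$ is Hausdorff and for every sequence $(x_n)_{n\in\bigcup\mathcal{I}}$ in $X$ there is $A\notin\mathcal{I}$ with $(x_n)_{n\in A}$ convergent in $X$. $\mathrm{Fin}^2$: ideal on $\omega^2$ of all $A$ with only finitely many $n$ such that $\{m:(n,m)\in A\}$ is infinite. $\mathcal{BI}$: ideal on $\omega^3$ of all $A$ for which there is $k$ with $\{(j,l):(i,j,l)\in A\}\in\mathrm{Fin}^2$ for $i<k$ and finite for $i\ge k$. $\mathcal{I}\sqsubseteq\mathcal{J}$: there is a bijection $f:\bigcup\mathcal{J}\to\bigcup\mathcal{I}$ with $f^{-1}[A]\in\mathcal{J}$ for all $A\in\mathcal{I}$. $\mathcal{I}$ is boring if $\mathcal{BI}\sqsubseteq\mathcal{I}$. A topological space is boring if it is sequentially compact and there is a finite $F\subseteq X$ such that every convergent sequence in $X$ with infinitely many distinct values converges to some point of $F$. *)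

(* Defs.v *)
From HB Require Import structures.
From mathcomp Require Import all_boot all_order.
From mathcomp Require Import boolp classical_sets functions cardinality topology.

Set Implicit Arguments.
Unset Strict Implicit.
Unset Printing Implicit Defensive.

Local Open Scope classical_set_scope.

Definition is_ideal (X : Type) (I : set (set X)) : Prop :=
  [/\ countable [set: X] /\ infinite_set [set: X],
      (forall A B : set X, B `<=` A -> I A -> I B),
      (forall A B : set X, I A -> I B -> I (A `|` B)),
      (forall A : set X, finite_set A -> I A) &
      ~ I [set: X]].

Definition Fin2 : set (set (nat * nat)) :=
  fun A => finite_set [set n | infinite_set [set m | A (n, m)]].

(* BI on omega^3, represented as nat * (nat * nat); (i,j,l) is (i,(j,l)). *)
Definition BI : set (set (nat * (nat * nat))) :=
  fun A => exists k : nat,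
    (forall i, (i < k)%N -> Fin2 [set p | A (i, p)]) /\
    (forall i, (k <= i)%N -> finite_set [set p | A (i, p)]).

Definition ideal_below (X Y : Type) (I : set (set X)) (J : set (set Y)) : Prop :=
  exists f : Y -> X, bijective f /\ (forall A : set X, I A -> J (f @^-1` A)).

Definition boring_ideal (X : Type) (I : set (set X)) : Prop :=
  ideal_below BI I.

Definition cvg_along (X : Type) (T : topologicalType) (A : set X)
    (u : X -> T) (x : T) : Prop :=
  forall U : set T, nbhs x U -> finite_set (A `&` [set n | ~ U (u n)]).

Definition FinBW (X : Type) (I : set (set X)) (T : topologicalType) : Prop :=
  hausdorff_space T /\
  forall u : X -> T, exists A : set X, ~ I A /\ exists x : T, cvg_along A u x.

Definition seq_compact (T : topologicalType) : Prop :=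
  forall u : nat -> T, exists phi : nat -> nat,
    (forall n, (phi n < phi n.+1)%N) /\ exists x : T, (u \o phi) @ \oo --> x.

Definition boring_space (T : topologicalType) : Prop :=
  seq_compact T /\
  exists F : set T, finite_set F /\
    forall u : nat -> T, (exists x : T, u @ \oo --> x) -> infinite_set (range u) ->
      exists2 x, F x & u @ \oo --> x.

(* Main.v *)
Require Import Defs.
From mathcomp Require Import all_boot all_order.
From mathcomp Require Import boolp classical_sets functions cardinality topology.
From mathcomp Require Import zify.

Set Implicit Arguments.
Unset Strict Implicit.
Unset Printing Implicit Defensive.

Local Open Scope classical_set_scope.

Lemma nat_bound (A : set nat) : finite_set A -> exists M, forall n, A n -> (n < M)%N.
Proof.
move=> /finite_fsetP[X ->]; exists (\max_(i <- finmap.enum_fset X) i).+1 => n /= nX.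
by rewrite ltnS; apply: (@leq_bigmax_seq _ (finmap.enum_fset X) xpredT id n).
Qed.

Lemma unbounded_of_infinite (A : set nat) :
  infinite_set A -> forall m, exists n, A n /\ (m < n)%N.
Proof.
move=> Ainf m; apply: contrapT => H; apply: Ainf.
apply: (@sub_finite_set _ _ `I_m.+1); last exact: finite_II.
move=> n An; rewrite /= ltnS leqNgt; apply/negP => mn; apply: H; by exists n.
Qed.

Lemma finite_fst_bound (B : set (nat * (nat * nat))) :
  finite_set B -> exists M, forall m, B m -> (m.2.1 < M)%N.
Proof.
move=> /(finite_image (fun m => m.2.1)) /nat_bound [M HM]; exists M => m Bm.
by apply: HM; exists m.
Qed.

Lemma inj_preimage_finite (A B : Type) (f : A -> B) (S : set A) (Z : set B) :
  injective f -> (forall a, S a -> Z (f a)) -> finite_set Z -> finite_set S.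
Proof.
move=> fi SZ Zf; apply: (@sub_finite_set _ _ (f @^-1` Z)); first by move=> a /SZ.
by apply: finite_preimage => // a b _ _ /fi.
Qed.

Lemma subsingleton_finite T (A : set T) :
  (forall a b, A a -> A b -> a = b) -> finite_set A.
Proof.
move=> H; case: (pselect (exists a, A a)) => [[a Aa]|N].
  apply: (@sub_finite_set _ _ [set a]); last exact: finite_set1.
  by move=> b Ab; rewrite /= (H _ _ Ab Aa).
apply: (@sub_finite_set _ _ set0); last exact: finite_set0.
by move=> b Ab; apply: N; exists b.
Qed.

Lemma hsep (T : topologicalType) : hausdorff_space T -> forall p q : T, p <> q ->
  exists U V, [/\ nbhs p U, nbhs q V & forall z, U z -> V z -> False].
Proof.
move=> hT p q pq; apply: contrapT => H; apply: pq; apply: hT => U V pU qV.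
apply: contrapT => N; apply: H; exists U, V; split => // z Uz Vz; apply: N.
by exists z.
Qed.

Lemma cvg_seqP (T : topologicalType) (u : nat -> T) (x : T) :
  u @ \oo --> x <-> forall U, nbhs x U -> exists N, forall n, (N <= n)%N -> U (u n).
Proof.
split=> H U hU.
  by case: (H U hU) => N _ HN; exists N => n hn; exact: HN.
by case: (H U hU) => N HN; exists N => // n; exact: HN.
Qed.

Fixpoint build (T : Type) (g : nat -> seq T -> T) (n : nat) : seq T :=
  if n is n'.+1 then rcons (build g n') (g n' (build g n')) else [::].

Lemma build_mem (T : eqType) (g : nat -> seq T -> T) m n :
  (m < n)%N -> g m (build g m) \in build g n.
Proof.
elim: n => // n IH; rewrite ltnS leq_eqVlt => /orP[/eqP->|mn] /=;
  rewrite mem_rcons inE; first by rewrite eqxx.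
by rewrite IH // orbT.
Qed.

Lemma greedy (T : choiceType) (P : nat -> T -> Prop) :
  (forall n (s : seq T), exists t, P n t /\ t \notin s) ->
  exists w : nat -> T, injective w /\ forall n, P n (w n).
Proof.
move=> H.
have [g Hg] := choice (P := fun (p : nat * seq T) t => P p.1 t /\ t \notin p.2)
  (fun p => H p.1 p.2).
pose g' n s := g (n, s).
exists (fun n => g' n (build g' n)); split; last first.
  by move=> n; exact: (Hg (n, _)).1.
move=> m n E; case: (ltngtP m n) => // [mn|nm].
  have := build_mem g' mn; rewrite E => F.
  by have := (Hg (n, build g' n)).2; rewrite /g' in F *; rewrite F.
have := build_mem g' nm; rewrite -E => F.
by have := (Hg (m, build g' m)).2; rewrite /g' in F *; rewrite F.
Qed.

Lemma FinBW_BI (X : Type) (I : set (set X)) (T : topologicalType) :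
  boring_ideal I -> FinBW I T -> forall v : nat * (nat * nat) -> T,
  exists B, ~ BI B /\ exists x, cvg_along B v x.
Proof.
move=> [f [fbij fI]] [_ HF] v.
have [A [nIA [x Hx]]] := HF (v \o f).
exists (f @` A); split.
  move=> /fI; have -> : f @^-1` (f @` A) = A; last by [].
  apply/seteqP; split => a /=; last by move=> Aa; exists a.
  by case=> b Ab /(bij_inj fbij) <-.
exists x => U xU; have := Hx U xU => /(finite_image f); apply: sub_finite_set.
by move=> m [[a Aa <-] nU]; exists a.
Qed.

Lemma notBI_col B : ~ BI B -> exists i, infinite_set [set p | B (i, p)].
Proof.
move=> nB; apply: contrapT => H; apply: nB; exists 0; split => // i _.
by apply: contrapT => Hi; apply: H; exists i.
Qed.

Lemma seqc (T : topologicalType) :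
  (forall v : nat * (nat * nat) -> T, exists B, ~ BI B /\ exists x, cvg_along B v x) ->
  seq_compact T.
Proof.
move=> HB u.
have [B [nB [x Hx]]] := HB (fun m => u (pickle m.2)).
have [i Hi] := notBI_col nB.
pose N := pickle @` [set p | B (i, p)].
have Ninf : infinite_set N.
  move=> Nf; apply: Hi; apply: (inj_preimage_finite (f := pickle) _ _ Nf).
    exact: (pcan_inj pickleK).
  by move=> p Bp; exists p.
have Ncvg : forall U, nbhs x U -> exists M, forall n, N n -> ~ U (u n) -> (n < M)%N.
  move=> U xU; have Hf := Hx U xU.
  have : finite_set (N `&` [set n | ~ U (u n)]).
    apply: (@sub_finite_set _ _ (pickle @` ((fun p => (i, p)) @^-1`
       (B `&` [set m | ~ U (u (pickle m.2))])))); last first.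
      apply: finite_image; apply: (inj_preimage_finite (f := fun p => (i, p))) Hf.
        by move=> p q [].
      by [].
    by move=> n [[p Bp <-] nU]; exists p.
  move=> /nat_bound [M HM]; exists M => n Nn nU; exact: HM.
have [g Hg] := choice (P := fun m n => N n /\ (m < n)%N) (unbounded_of_infinite Ninf).
pose phi := fix phi n := if n is n'.+1 then g (phi n') else g 0.
exists phi; split; first by move=> n; exact: (Hg (phi n)).2.
exists x; apply/cvg_seqP => U xU.
have [M HM] := Ncvg U xU.
have phige : forall n, (n <= phi n)%N.
  by elim=> [|n IH] //=; exact: leq_ltn_trans IH (Hg _).2.
have phiN : forall n, N (phi n) by case=> [|n]; exact: (Hg _).1.
exists M => n Mn; apply: contrapT => nU; have := HM _ (phiN n) nU.
by rewrite ltnNge (leq_trans Mn (phige n)).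
Qed.

Lemma main_comb (T : topologicalType) (hT : hausdorff_space T)
  (c : nat -> nat -> T) (x : nat -> T) :
  (forall i j i' j', c i j = c i' j' -> i = i' /\ j = j') -> injective x ->
  (forall i V, nbhs (x i) V -> exists N, forall j, (N <= j)%N -> V (c i j)) ->
  forall B y, cvg_along B (fun m => c m.1 m.2.1) y -> BI B.
Proof.
move=> cinj xinj cx B y Hy.
pose S i j := [set l | B (i, (j, l))].
have T1 : forall i j, infinite_set (S i j) -> c i j = y.
  move=> i j Sinf; apply: contrapT => cy.
  have [U [V [yU cV UV]]] := hsep hT (nesym cy).
  apply: Sinf; apply: (inj_preimage_finite (f := fun l => (i, (j, l)))) (Hy U yU).
    by move=> l l' [].
  move=> l Sl; split => //= Ul; exact: UV _ Ul (nbhs_singleton cV).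
have LIM : forall i, (forall j, finite_set (S i j)) ->
    infinite_set [set p | B (i, p)] -> x i = y.
  move=> i Sfin Binf; apply: contrapT => xy.
  have [U [V [yU xV UV]]] := hsep hT (nesym xy).
  have [N HN] := cx i V xV.
  have [M HM] := finite_fst_bound (Hy U yU).
  apply: Binf.
  apply: (@sub_finite_set _ _ (`I_(maxn N M) `*`` S i)).
    move=> [j l] Bjl; split => //=.
    rewrite ltnNge; apply/negP => Hj.
    have : (j < M)%N.
      apply: (HM (i, (j, l))); split => //= Uc.
      by apply: UV Uc (HN j _); exact: leq_trans (leq_maxl N M) Hj.
    by rewrite ltnNge (leq_trans (leq_maxr N M) Hj).
  apply: finite_setXR; first exact: finite_II.
  by move=> j _; exact: Sfin.
have [k0 H0] : exists k0, forall i j, infinite_set (S i j) -> (i < k0)%N.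
  case: (pselect (exists i j, infinite_set (S i j))) => [[i0 [j0 Hi0]]|N].
    exists i0.+1 => i j H.
    have E : c i j = c i0 j0 by rewrite (T1 _ _ H) (T1 _ _ Hi0).
    by rewrite ((cinj _ _ _ _ E).1).
  by exists 0 => i j H; exfalso; apply: N; exists i, j.
have [k1 H1] : exists k1, forall i, (forall j, finite_set (S i j)) ->
    infinite_set [set p | B (i, p)] -> (i < k1)%N.
  case: (pselect (exists i, (forall j, finite_set (S i j)) /\
      infinite_set [set p | B (i, p)])) => [[i0 [Hf0 Hi0]]|N].
    exists i0.+1 => i Hf H.
    have E : x i = x i0 by rewrite (LIM _ Hf H) (LIM _ Hf0 Hi0).
    by rewrite (xinj _ _ E).
  by exists 0 => i Hf H; exfalso; apply: N; exists i.
exists (k0 + k1); split.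
  move=> i _; apply: subsingleton_finite => j j' /= Hj Hj'.
  have E : c i j = c i j' by rewrite (T1 i j Hj) (T1 i j' Hj').
  exact: (cinj _ _ _ _ E).2.
move=> i ki; apply: contrapT => Binf.
case: (pselect (forall j, finite_set (S i j))) => [Hf|Hn].
  have := H1 i Hf Binf; lia.
have [j Hj] : exists j, infinite_set (S i j).
  apply: contrapT => N; apply: Hn => j; apply: contrapT => Hj; apply: N.
  by exists j.
have := H0 i j Hj; lia.
Qed.

Theorem proposition6p3 (X : Type) (I : set (set X)) :
  is_ideal I -> boring_ideal I ->
  forall T : topologicalType, hausdorff_space T -> FinBW I T -> boring_space T.
Proof.
move=> Iid Ibor T hT HF.
have HB := FinBW_BI Ibor HF.
split; first exact: seqc HB.
pose L := [set x : T | exists u : nat -> T, u @ \oo --> x /\ infinite_set (range u)].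
exists L; split; last by move=> u [x ux] ui; exists x => //; exists u.
apply: contrapT => Linf.
have [x [xinj xL]] : exists x : nat -> T, injective x /\ forall n, L (x n).
  apply: (greedy (P := fun _ t => L t)) => n s.
  apply: contrapT => H; apply: Linf.
  apply: (@sub_finite_set _ _ [set` s]); last exact: finite_seq.
  move=> t Lt; apply: contrapT => ts; apply: H; exists t; split => //.
  by apply/negP.
have [u Hu] := choice (P := fun i (u : nat -> T) => u @ \oo --> x i /\ infinite_set (range u)) xL.
pose d n : nat * nat := odflt (0, 0) (unpickle n).
have [w [winj Hw]] : exists w : nat -> T, injective w /\
    forall n, exists k, ((d n).2 <= k)%N /\ u (d n).1 k = w n.
  apply: (greedy (P := fun n t => exists k, ((d n).2 <= k)%N /\ u (d n).1 k = t)) => n s.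
  apply: contrapT => H; apply: (Hu (d n).1).2.
  apply: (@sub_finite_set _ _ ([set` s] `|` (u (d n).1 @` `I_((d n).2)))); last first.
    by rewrite finite_setU; split; [exact: finite_seq | apply: finite_image; exact: finite_II].
  move=> t [k _ <-]; case: (ltnP k (d n).2) => kd; first by right; exists k.
  left; apply: contrapT => ts; apply: H; exists (u (d n).1 k); split; first by exists k.
  by apply/negP.
pose c (i j : nat) := w (pickle (i, j)).
have [B [nB [y Hy]]] := HB (fun m => c m.1 m.2.1).
apply: nB; apply: (main_comb hT (x := x) _ xinj _ Hy).
  by move=> i j i' j' /winj /(pcan_inj pickleK) [-> ->].
move=> i V xV; have [N HN] := (cvg_seqP _ _).1 (Hu i).1 V xV.
exists N => j Nj; have [k [kd kE]] := Hw (pickle (i, j)).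
rewrite /c -kE; move: kd; rewrite /d pickleK /= => jk; apply: HN.
exact: leq_trans Nj jk.
Qed.
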